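(* In the setting of the context, $q_B=\tilde q=q|_B$ and $q_A=q|_A$, and $E_{M_1}(q(c))=q_A(E_{M_1}(c))$ for all $c\in C$.
   Context: $k$ is a field; $C_R(S)=\{r\in R:rs=sr\ \forall s\in S\}$. $N\subseteq M$ is a strongly separable, irreducible extension of $k$-algebras: $C_M(N)=k1$ and there are an $N$-bimodule map $E:M\to N$ and $x_1,\dots,x_n,y_1,\dots,y_n\in M$ with $\sum_iE(mx_i)y_i=m=\sum_ix_iE(y_im)$ for all $m\in M$, $E(1)\neq0$, $\sum_ix_iy_i\neq0$; normalized so that $E(1)=1$, whence $\sum_ix_iy_i=\lambda^{-1}1$ with $0\neq\lambda\in k$. Basic construction: given $S\subseteq R$, an $S$-bimodule map $E_S:R\to S$ with $E_S(1)=1$ and $r_i,s_i\in R$ with $\sum_iE_S(rr_i)s_i=r=\sum_ir_iE_S(s_ir)$ and $\sum_ir_is_i=\lambda^{-1}1$, set $R_1=R\otimes_SR$ with product $(a\otimes b)(c\otimes d)=aE_S(bc)\otimes d$, unit $\sum_ir_i\otimes s_i$, $R\subseteq R_1$ via $r\mapsto\sum_irr_i\otimes s_i$, $E_R:R_1\to R$, $a\otimes b\mapsto\lambda ab$; then $E_R$, $\lambda^{-1}r_i\otimes1$, $1\otimes s_i$ satisfy the same conditions with the same $\lambda$. From $(N\subseteq M,E)$ get $M_1,E_M$; from $(M\subseteq M_1,E_M)$ get $M_2,E_{M_1}$. Let $A=C_{M_1}(N)$, $B=C_{M_2}(M)$, $C=C_{M_2}(N)$. Depth 2 is assumed: $M_1$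 is free as right $M$-module with basis in $A$, $M_2$ free as right $M_1$-module with basis in $B$. Let $F=E_M\circ E_{M_1}$; on $C$ it takes values in $C_M(N)=k1\cong k$ and is a faithful linear functional on $C$; $E_M|_A$ is a faithful functional on $A$ and $E_{M_1}|_B$ a faithful functional on $B$ (values in $k1$). Nakayama automorphisms: $q:C\to C$ is defined by $F(q(c)c')=F(c'c)$ for all $c,c'\in C$; $q_A:A\to A$ by $E_M(q_A(a)a')=E_M(a'a)$ for all $a,a'\in A$; $q_B:B\to B$ by $E_{M_1}(q_B(b)b')=E_{M_1}(b'b)$ for all $b,b'\in B$; and $\tilde q:B\to B$ by $\hat F(\tilde q(b)x)=\hat F(xb)$ for all $b\in B$, $x\in M_2$, where $\hat F=E_M\circ E_{M_1}:M_2\to M$. Note $E_{M_1}(C)\subseteq A$. *)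

(* Defs.v *)
From HB Require Import structures.
From mathcomp Require Import all_boot all_order all_algebra.
Set Implicit Arguments. Unset Strict Implicit. Unset Printing Implicit Defensive.
Import GRing.Theory.
Local Open Scope ring_scope.

Section BasicDefs.
Variable k : fieldType.

Definition klinear (U V : lmodType k) (f : U -> V) : Prop :=
  forall (a : k) (u v : U), f (a *: u + v) = a *: f u + f v.

Definition is_subalg (R : algType k) (S : R -> Prop) : Prop :=
  S 1 /\
  (forall u v, S u -> S v -> S (u + v)) /\
  (forall u v, S u -> S v -> S (u * v)) /\
  (forall (a : k) u, S u -> S (a *: u)).

Definition centralizer (R : algType k) (S : R -> Prop) : R -> Prop :=
  fun r => forall s, S s -> r * s = s * r.

(* A strongly separable (normalized) extension S ⊆ R with conditional
   expectation ES : R -> S (written as a map R -> R with values in S),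
   quasi-basis (xs, ys) and index constant lam:
   ES is an S-bimodule map, ES 1 = 1,
   sum_i ES(r xs_i) ys_i = r = sum_i xs_i ES(ys_i r), sum_i xs_i ys_i = lam^-1 1. *)
Definition strongly_separable (R : algType k) (S : R -> Prop) (ES : R -> R)
    (n : nat) (xs ys : 'I_n -> R) (lam : k) : Prop :=
  (forall r, S (ES r)) /\
  klinear ES /\
  (forall s1 r s2, S s1 -> S s2 -> ES (s1 * r * s2) = s1 * ES r * s2) /\
  ES 1 = 1 /\
  (forall r, \sum_(i < n) ES (r * xs i) * ys i = r) /\
  (forall r, \sum_(i < n) xs i * ES (ys i * r) = r) /\
  \sum_(i < n) xs i * ys i = lam^-1 *: 1 /\
  lam != 0.

Definition bc_incl (R R1 : algType k) (t : R -> R -> R1) (n : nat)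
    (xs ys : 'I_n -> R) (r : R) : R1 :=
  \sum_(i < n) t (r * xs i) (ys i).

(* (R1, t, ER) is the basic construction of (S ⊆ R, ES, xs, ys, lam):
   - t : R × R -> R1 is k-bilinear and S-balanced, and (R1, t) is the tensor
     product R ⊗_S R (universal property: every S-balanced k-bilinear map
     factors through a k-linear map, and R1 is spanned by the a ⊗ b);
   - the product of R1 is (a⊗b)(c⊗d) = a ES(bc) ⊗ d, its unit is sum_i xs_i⊗ys_i;
   - ER : R1 -> R is the k-linear map a⊗b |-> lam a b. *)
Definition basic_construction (R : algType k) (S : R -> Prop) (ES : R -> R)
    (n : nat) (xs ys : 'I_n -> R) (lam : k)
    (R1 : algType k) (t : R -> R -> R1) (ER : R1 -> R) : Prop :=
  (forall (a : k) u v w, t (a *: u + v) w = a *: t u w + t v w) /\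
  (forall (a : k) u v w, t u (a *: v + w) = a *: t u v + t u w) /\
  (forall u s v, S s -> t (u * s) v = t u (s * v)) /\
  (forall (V : lmodType k) (f : R -> R -> V),
        (forall (a : k) u v w, f (a *: u + v) w = a *: f u w + f v w) ->
        (forall (a : k) u v w, f u (a *: v + w) = a *: f u v + f u w) ->
        (forall u s v, S s -> f (u * s) v = f u (s * v)) ->
        exists g : R1 -> V, klinear g /\ forall u v, g (t u v) = f u v) /\
  (forall z : R1, exists (m : nat) (us vs : 'I_m -> R),
        z = \sum_(j < m) t (us j) (vs j)) /\
  (forall u v w z, t u v * t w z = t (u * ES (v * w)) z) /\
  (1 : R1) = \sum_(i < n) t (xs i) (ys i) /\
  klinear ER /\
  (forall u v, ER (t u v) = lam *: (u * v)).

Definition free_right_basis_in (R R1 : algType k) (iota : R -> R1)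
    (P : R1 -> Prop) : Prop :=
  exists (m : nat) (b : 'I_m -> R1),
    [/\ forall j, P (b j),
        forall z : R1, exists c : 'I_m -> R, z = \sum_(j < m) b j * iota (c j)
      & forall c : 'I_m -> R, \sum_(j < m) b j * iota (c j) = 0 ->
          forall j, c j = 0].

Definition scalar_valued_on (R T : algType k) (f : R -> T) (P : R -> Prop) :=
  forall r, P r -> exists a : k, f r = a%:A.

Definition faithful_on (R T : algType k) (f : R -> T) (P : R -> Prop) :=
  (forall c, P c -> (forall c', P c' -> f (c * c') = 0) -> c = 0) /\
  (forall c, P c -> (forall c', P c' -> f (c' * c) = 0) -> c = 0).

Definition nakayama_on (R T : algType k) (f : R -> T) (P : R -> Prop)
    (q : R -> R) :=
  forall c, P c -> P (q c) /\ forall c', P c' -> f (q c * c') = f (c' * c).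

End BasicDefs.

(* Main.v *)
Require Import Defs.
From HB Require Import structures.
From mathcomp Require Import all_boot all_order all_algebra.
Import GRing.Theory.
Local Open Scope ring_scope.
Set Implicit Arguments. Unset Strict Implicit. Unset Printing Implicit Defensive.

Section Lin.
Variables (k : fieldType) (U V : lmodType k) (f : U -> V).
Hypothesis fl : klinear f.
Lemma kl_add u v : f (u + v) = f u + f v.
Proof. by have := fl 1 u v; rewrite !scale1r. Qed.
Lemma kl0 : f 0 = 0.
Proof. have h := kl_add 0 0; rewrite addr0 in h. by apply: (addrI (f 0)); rewrite -h addr0. Qed.
Lemma klZ a u : f (a *: u) = a *: f u.
Proof. by have := fl a u 0; rewrite addr0 kl0 addr0. Qed.
Lemma kl_sum (I : Type) (r : seq I) (P : pred I) (F : I -> U) :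
  f (\sum_(i <- r | P i) F i) = \sum_(i <- r | P i) f (F i).
Proof. apply: big_morph; [exact: kl_add | exact: kl0]. Qed.
End Lin.

Section Gen.
Variables (k : fieldType) (R R1 : algType k) (S : R -> Prop) (ES : R -> R)
  (n : nat) (xs ys : 'I_n -> R) (lam : k) (t : R -> R -> R1) (ER : R1 -> R).
Hypothesis tl : forall (a : k) u v w, t (a *: u + v) w = a *: t u w + t v w.
Hypothesis tr : forall (a : k) u v w, t u (a *: v + w) = a *: t u v + t u w.
Hypothesis tbal : forall u s v, S s -> t (u * s) v = t u (s * v).
Hypothesis tspan : forall z : R1, exists (m : nat) (us vs : 'I_m -> R),
        z = \sum_(j < m) t (us j) (vs j).
Hypothesis tmul : forall u v w z, t u v * t w z = t (u * ES (v * w)) z.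
Hypothesis ERl : klinear ER.
Hypothesis ERt : forall u v, ER (t u v) = lam *: (u * v).
Hypothesis ESS : forall r, S (ES r).
Hypothesis q1 : forall r, \sum_(i < n) ES (r * xs i) * ys i = r.
Hypothesis q2 : forall r, \sum_(i < n) xs i * ES (ys i * r) = r.

Let i := bc_incl t xs ys.

Lemma tlK w : klinear (fun u => t u w).
Proof. by move=> a u v; apply: tl. Qed.
Lemma trK u : klinear (t u).
Proof. by move=> a v w; apply: tr. Qed.

Lemma iL m u v : i m * t u v = t (m * u) v.
Proof.
rewrite /i /bc_incl mulr_suml.
under eq_bigr do rewrite tmul.
rewrite -(kl_sum (tlK v)); congr t.
by rewrite -{2}(q2 u) mulr_sumr; apply: eq_bigr => j _; rewrite !mulrA.
Qed.

Lemma iR m u v : t u v * i m = t u (v * m).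
Proof.
rewrite /i /bc_incl mulr_sumr.
under eq_bigr do rewrite tmul tbal //.
rewrite -(kl_sum (trK u)); congr t.
by rewrite -(q1 (v * m)); apply: eq_bigr => j _; rewrite !mulrA.
Qed.

Lemma ilin : klinear i.
Proof.
move=> a u v; rewrite /i /bc_incl scaler_sumr -big_split /=.
by apply: eq_bigr => j _; rewrite mulrDl -scalerAl tl.
Qed.

Lemma imul u v : i u * i v = i (u * v).
Proof.
rewrite {2}/i /bc_incl mulr_sumr; apply: eq_bigr => j _.
by rewrite iL mulrA.
Qed.

Lemma span_ext (W : lmodType k) (f g : R1 -> W) :
  (forall u v, f (u + v) = f u + f v) -> (forall u v, g (u + v) = g u + g v) ->
  (forall u v, f (t u v) = g (t u v)) -> forall z, f z = g z.
Proof.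
move=> fa ga fg z; have [m [us [vs ->]]] := tspan z.
have f0 : f 0 = 0 by apply: (addrI (f 0)); rewrite -fa !addr0.
have g0 : g 0 = 0 by apply: (addrI (g 0)); rewrite -ga !addr0.
rewrite (big_morph f fa f0) (big_morph g ga g0).
by apply: eq_bigr => j _.
Qed.

Lemma ER_l m z : ER (i m * z) = m * ER z.
Proof.
apply: (span_ext (f := fun z => ER (i m * z)) (g := fun z => m * ER z)) => /=.
- by move=> u v; rewrite mulrDr (kl_add ERl).
- by move=> u v; rewrite (kl_add ERl) mulrDr.
by move=> u v; rewrite iL !ERt -scalerAr mulrA.
Qed.

Lemma ER_r m z : ER (z * i m) = ER z * m.
Proof.
apply: (span_ext (f := fun z => ER (z * i m)) (g := fun z => ER z * m)) => /=.
- by move=> u v; rewrite mulrDl (kl_add ERl).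
- by move=> u v; rewrite (kl_add ERl) mulrDl.
by move=> u v; rewrite iR !ERt -scalerAl mulrA.
Qed.

Hypothesis lam0 : lam != 0.

Lemma Q2 r : \sum_(j < n) i (ER (r * (lam^-1 *: t (xs j) 1))) * t 1 (ys j) = r.
Proof.
apply: (span_ext (f := fun r => \sum_(j < n) i (ER (r * (lam^-1 *: t (xs j) 1))) * t 1 (ys j))
   (g := id)) => //=.
- move=> u v; rewrite -big_split /=; apply: eq_bigr => j _.
  by rewrite mulrDl (kl_add ERl) (kl_add ilin) mulrDl.
move=> u v.
under eq_bigr do rewrite -scalerAr tmul (klZ ERl) ERt scalerA mulVf // scale1r mulr1 iL mulr1 tbal //.
by rewrite -(kl_sum (trK u)) q1.
Qed.

Lemma Q1 r : \sum_(j < n) (lam^-1 *: t (xs j) 1) * i (ER (t 1 (ys j) * r)) = r.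
Proof.
apply: (span_ext (f := fun r => \sum_(j < n) (lam^-1 *: t (xs j) 1) * i (ER (t 1 (ys j) * r)))
   (g := id)) => //=.
- move=> u v; rewrite -big_split /=; apply: eq_bigr => j _.
  by rewrite mulrDr (kl_add ERl) (kl_add ilin) mulrDr.
move=> u v.
under eq_bigr do rewrite tmul mul1r ERt (klZ ilin) -scalerAl -scalerAr scalerA mulVf // scale1r iR mul1r -tbal //.
by rewrite -(kl_sum (tlK v)) q2.
Qed.

End Gen.

Lemma alg_inj (k : fieldType) (M : algType k) (a b : k) :
  a%:A = b%:A :> M -> a = b.
Proof.
move/eqP; rewrite -subr_eq0 -scalerBl scaler_eq0 oner_eq0 orbF subr_eq0.
by move/eqP.
Qed.

Lemma cent_sub (k : fieldType) (M : algType k) (P : M -> Prop) u v :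
  centralizer P u -> centralizer P v -> centralizer P (u - v).
Proof. by move=> hu hv s hs; rewrite mulrBl mulrBr hu // hv. Qed.

Lemma cent_mul (k : fieldType) (M : algType k) (P : M -> Prop) u v :
  centralizer P u -> centralizer P v -> centralizer P (u * v).
Proof. by move=> hu hv s hs; rewrite -mulrA hv // mulrA hu // mulrA. Qed.

Theorem proposition3p9
  (k : fieldType) (M M1 M2 : algType k)
  (N : M -> Prop) (E : M -> M) (n : nat) (x y : 'I_n -> M) (lam : k)
  (t1 : M -> M -> M1) (EM : M1 -> M)
  (t2 : M1 -> M1 -> M2) (EM1 : M2 -> M1)
  (q : M2 -> M2) (qA : M1 -> M1) (qB qt : M2 -> M2) :
  is_subalg N ->
  strongly_separable N E x y lam ->
  (forall m, centralizer N m -> exists a : k, m = a%:A) ->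
  basic_construction N E x y lam t1 EM ->
  basic_construction (fun z : M1 => exists m : M, z = bc_incl t1 x y m)
    (fun z : M1 => bc_incl t1 x y (EM z))
    (fun i => lam^-1 *: t1 (x i) 1) (fun i => t1 1 (y i)) lam t2 EM1 ->
  let i1 := bc_incl t1 x y in
  let i2 := bc_incl t2 (fun i => lam^-1 *: t1 (x i) 1) (fun i => t1 1 (y i)) in
  let A := centralizer (fun z : M1 => exists m, N m /\ z = i1 m) in
  let B := centralizer (fun z : M2 => exists m, z = i2 (i1 m)) in
  let C := centralizer (fun z : M2 => exists m, N m /\ z = i2 (i1 m)) in
  let F := fun z : M2 => EM (EM1 z) in
  free_right_basis_in i1 A ->
  free_right_basis_in i2 B ->
  scalar_valued_on F C -> faithful_on F C ->
  scalar_valued_on EM A -> faithful_on EM A ->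
  scalar_valued_on EM1 B -> faithful_on EM1 B ->
  (forall c, C c -> A (EM1 c)) ->
  nakayama_on F C q ->
  nakayama_on EM A qA ->
  nakayama_on EM1 B qB ->
  (forall b, B b -> B (qt b) /\ forall z : M2, F (qt b * z) = F (z * b)) ->
  [/\ forall b, B b -> qB b = qt b /\ qt b = q b,
      forall a, A a -> i2 (qA a) = q (i2 a)
    & forall c, C c -> EM1 (q c) = qA (EM1 c)].
Proof.
move=> Hsub Hss Hirr Hbc1 Hbc2 i1 i2 A B C F _ _ FsC FfC EMsA EMfA EM1sB EM1fB
  EM1CA Hq HqA HqB Hqt.
have [N1 _] := Hsub.
have [Ev [El [Ebim [E1 [qx1 [qx2 [sumxy lam0]]]]]]] := Hss.
have [t1l [t1r [t1bal [_ [t1span [t1mul [one1 [EMl EMt]]]]]]]] := Hbc1.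
have [t2l [t2r [t2bal [_ [t2span [t2mul [one2 [EM1l EM1t]]]]]]]] := Hbc2.
have Q1' := Q1 t1l t1r t1bal t1span t1mul EMl EMt Ev qx1 qx2 lam0.
have Q2' := Q2 t1l t1r t1bal t1span t1mul EMl EMt Ev qx1 qx2 lam0.
have ESS' : forall r : M1, (fun z : M1 => exists m : M, z = bc_incl t1 x y m)
    ((fun z : M1 => bc_incl t1 x y (EM z)) r) by move=> r; exists (EM r).
have EM1L : forall m z, EM1 (i2 m * z) = m * EM1 z :=
  ER_l (ES := fun z : M1 => bc_incl t1 x y (EM z)) t2l t2span t2mul EM1l EM1t Q1'.
have EM1R : forall m z, EM1 (z * i2 m) = EM1 z * m :=
  ER_r (S := fun z : M1 => exists m : M, z = bc_incl t1 x y m) (ES := fun z : M1 => bc_incl t1 x y (EM z)) t2r t2bal t2span t2mul EM1l EM1t ESS' Q2'.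
have i2mul : forall u v, i2 u * i2 v = i2 (u * v) := imul (ES := fun z : M1 => bc_incl t1 x y (EM z)) t2l t2mul Q1'.
have EM_1 : EM 1 = 1.
  rewrite one1 (kl_sum EMl); under eq_bigr do rewrite EMt.
  by rewrite -scaler_sumr sumxy scalerA mulfV // scale1r.
have Fadd : forall u v, F (u - v) = F u - F v.
  move=> u v; rewrite /F.
  have h1 : forall (U V : lmodType k) (f : U -> V), klinear f ->
     forall u v, f (u - v) = f u - f v.
    move=> U V f fl u' v'; rewrite (kl_add fl) -scaleN1r (klZ fl) scaleN1r //.
  by rewrite (h1 _ _ _ EM1l) (h1 _ _ _ EMl).
have EM1sub : forall u v, EM1 (u - v) = EM1 u - EM1 v.
  by move=> u v; rewrite (kl_add EM1l) -scaleN1r (klZ EM1l) scaleN1r.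
have EMsub : forall u v, EM (u - v) = EM u - EM v.
  by move=> u v; rewrite (kl_add EMl) -scaleN1r (klZ EMl) scaleN1r.
have BC : forall b, B b -> C b.
  by move=> b Bb z [m [_ ->]]; apply: Bb; exists m.
have i2A : forall a, A a -> C (i2 a).
  move=> a Aa z [m [Nm ->]].
  rewrite !i2mul Aa //; by exists m.
have P1a : forall b, B b -> qB b = qt b.
  move=> b Bb; have [BqB HqB'] := HqB b Bb; have [Bqt Hqt'] := Hqt b Bb.
  apply/eqP; rewrite -subr_eq0; apply/eqP.
  apply: (proj1 EM1fB); first exact: cent_sub.
  move=> c' Bc'; rewrite mulrBl EM1sub HqB' //.
  have [al hal] := EM1sB _ (cent_mul Bqt Bc').
  have [be hbe] := EM1sB _ (cent_mul Bc' Bb).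
  have := Hqt' c'; rewrite /F hal hbe (klZ EMl) (klZ EMl) EM_1 => /alg_inj ->.
  by rewrite subrr.
have P1b : forall b, B b -> qt b = q b.
  move=> b Bb; have [Bqt Hqt'] := Hqt b Bb; have [Cq Hq'] := Hq b (BC b Bb).
  apply/eqP; rewrite -subr_eq0; apply/eqP.
  apply: (proj1 FfC); first by apply: cent_sub => //; apply: BC.
  by move=> c' Cc'; rewrite mulrBl Fadd Hqt' Hq' // subrr.
split.
- by move=> b Bb; split; [exact: P1a | exact: P1b].
- move=> a Aa; have [AqA HqA'] := HqA a Aa; have [Cq Hq'] := Hq _ (i2A a Aa).
  apply/eqP; rewrite -subr_eq0; apply/eqP.
  apply: (proj1 FfC); first by apply: cent_sub => //; apply: i2A.
  move=> c' Cc'; rewrite mulrBl Fadd Hq' // /F EM1L EM1R HqA' ?subrr //.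
  exact: EM1CA.
- move=> c Cc; have [Cq Hq'] := Hq c Cc.
  apply/eqP; rewrite -subr_eq0; apply/eqP.
  have AE := EM1CA _ Cc.
  have [AqA HqA'] := HqA _ AE.
  apply: (proj1 EMfA); first by apply: cent_sub => //; apply: EM1CA.
  move=> a' Aa'; rewrite mulrBl EMsub HqA' //.
  rewrite -EM1R -/(F _) (Hq' _ (i2A a' Aa')) /F EM1L subrr //.
Qed.
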